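(* Let $\mu$ be a probability measure on $\mathbb{R}$ admitting a density with respect to Lebesgue measure. Let $N\ge 2$, $p_1,\dots,p_N\ge1$, $p=\sum_i p_i$, and let $\mathbf{C}=\mathbf{I}_p-\mathbf{K}$, where $\mathbf{K}$ is the $p\times p$ block matrix (blocks of sizes $p_i\times p_j$) with zero diagonal blocks and off-diagonal blocks $\mathbf{C}_{i,j}\in\mathbb{R}^{p_i\times p_j}$, $i\ne j$. If all entries of the off-diagonal blocks $\mathbf{C}_{i,j}$ are sampled independently at random from $\mu$, then $\mathbf{C}$ is invertible with probability $1$. *)

(* Defs.v *)
From HB Require Import structures.
From mathcomp Require Import all_boot all_order all_algebra.
From mathcomp Require Import all_classical all_reals all_analysis.
Set Implicit Arguments. Unset Strict Implicit. Unset Printing Implicit Defensive.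
Import Order.TTheory GRing.Theory Num.Theory.
Local Open Scope classical_set_scope.
Local Open Scope ring_scope.

Definition has_lebesgue_density (R : realType)
    (mu : set R -> \bar R) : Prop :=
  exists f : R -> R, measurable_fun setT f /\ (forall x, 0 <= f x) /\
    forall A : set R, measurable A ->
      mu A = (\int[lebesgue_measure]_(x in A) (f x)%:E)%E.

Definition mutually_independent (d : measure_display) (T : measurableType d)
    (R : realType) (P : probability T R) (I : finType) (X : I -> T -> R) : Prop :=
  forall B : I -> set R, (forall i, measurable (B i)) ->
    P (\bigcap_(i in [set: I]) (X i @^-1` B i)) =
    (\prod_(i : I) P (X i @^-1` B i))%E.

Definition has_law (d : measure_display) (T : measurableType d)
    (R : realType) (P : probability T R) (X : T -> R) (mu : set R -> \bar R) : Prop :=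
  measurable_fun setT X /\
  forall A : set R, measurable A -> P (X @^-1` A) = mu A.

(* block index of a row/column index of a (\sum_i p i) x (\sum_i p i) matrix *)
Definition blk (N : nat) (p : 'I_N -> nat) (r : 'I_(\sum_(i < N) p i)) : 'I_N :=
  tagnat.sig1 r.
Arguments blk {N} p r.

Definition offdiag (N : nat) (p : 'I_N -> nat)
    (rc : 'I_(\sum_(i < N) p i) * 'I_(\sum_(i < N) p i)) : bool :=
  blk p rc.1 != blk p rc.2.
Arguments offdiag {N} p rc.

Definition offdiag_pos (N : nat) (p : 'I_N -> nat) :=
  {rc : 'I_(\sum_(i < N) p i) * 'I_(\sum_(i < N) p i) | offdiag p rc}.
Arguments offdiag_pos {N} p.

Definition Kmat (R : ringType) (N : nat) (p : 'I_N -> nat)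
    (x : offdiag_pos p -> R) : 'M[R]_(\sum_(i < N) p i) :=
  \matrix_(r, c) match boolP (offdiag p (r, c)) with
                 | AltTrue h => x (exist _ (r, c) h)
                 | AltFalse _ => 0
                 end.

Definition Cmat (R : ringType) (N : nat) (p : 'I_N -> nat)
    (x : offdiag_pos p -> R) : 'M[R]_(\sum_(i < N) p i) :=
  1%:M - Kmat x.

(* Main.v *)
Set Warnings "-notation-overridden,-ambiguous-paths,-notation-incompatible-prefix,-deprecated".
Require Import Defs.
From HB Require Import structures.
From mathcomp Require Import all_boot all_order all_algebra.
From mathcomp Require Import all_classical all_reals all_analysis.
From mathcomp Require Import ring measurable_realfun.
Import Order.TTheory GRing.Theory Num.Theory.
Local Open Scope classical_set_scope.
Local Open Scope ring_scope.
Section MA.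
Variables (R : realType) (I : finType).
Definition upd (x : I -> R) (k : I) (t : R) : I -> R :=
  fun i => if i == k then t else x i.
Definition dep (J : {set I}) (phi : (I -> R) -> R) :=
  forall x y, (forall j, j \in J -> x j = y j) -> phi x = phi y.
Definition aff (phi : (I -> R) -> R) :=
  forall k x t, phi (upd x k t) = phi (upd x k 0) + t * (phi (upd x k 1) - phi (upd x k 0)).
Definition MA J phi := dep J phi /\ aff phi.

Lemma upd_id x k : upd x k (x k) = x.
Proof. by apply/funext => i; rewrite /upd; case: eqP => [->|]. Qed.

Lemma upd_upd x k s t : upd (upd x k s) k t = upd x k t.
Proof. by apply/funext => i; rewrite /upd; case: eqP. Qed.

Lemma upd_comm x j k s t : j != k -> upd (upd x j s) k t = upd (upd x k t) j s.
Proof.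
move=> jk; apply/funext => i; rewrite /upd.
by have [-> | ik] := eqVneq i k; first by rewrite eq_sym (negbTE jk).
Qed.

Lemma aff_sub f g : aff f -> aff g -> aff (fun x => f x - g x).
Proof. by move=> hf hg k x t; rewrite hf hg; ring. Qed.

Lemma aff_fix phi k c : aff phi -> aff (fun x => phi (upd x k c)).
Proof.
move=> h j x t; have [->|jk] := eqVneq j k.
  by rewrite !upd_upd; ring.
by rewrite !(upd_comm _ _ _ _ _ jk) h.
Qed.

Lemma dep_fix J phi k c : dep J phi -> dep (J :\ k) (fun x => phi (upd x k c)).
Proof.
move=> h x y hxy; apply: h => j jJ; rewrite /upd; case: eqP => // /eqP jk.
by apply: hxy; rewrite in_setD1 jk.
Qed.

Lemma dep_sub J f g : dep J f -> dep J g -> dep J (fun x => f x - g x).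
Proof. by move=> hf hg x y h; rewrite (hf x y h) (hg x y h). Qed.

Definition bpart (phi : (I -> R) -> R) k := fun x => phi (upd x k 0).
Definition apart (phi : (I -> R) -> R) k := fun x => phi (upd x k 1) - phi (upd x k 0).

Lemma MA_b J phi k : MA J phi -> MA (J :\ k) (bpart phi k).
Proof. by case=> h1 h2; split; [exact: dep_fix|exact: aff_fix]. Qed.

Lemma MA_a J phi k : MA J phi -> MA (J :\ k) (apart phi k).
Proof.
case=> h1 h2; split; first by apply: dep_sub; exact: dep_fix.
by apply: aff_sub; exact: aff_fix.
Qed.

Lemma MA_dec phi k x : aff phi -> phi x = bpart phi k x + x k * apart phi k x.
Proof. by move=> h; rewrite -{1}(upd_id x k) h. Qed.

Lemma MA0 phi : dep (finset.set0 : {set I}) phi -> forall x, phi x = phi (fun=> 0).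
Proof. by move=> h x; apply: h => j; rewrite finset.in_set0. Qed.
End MA.
Arguments upd {R I}. Arguments dep {R I}. Arguments aff {R I}. Arguments MA {R I}.
Arguments bpart {R I}. Arguments apart {R I}.
Arguments MA_b {R I J phi}. Arguments MA_a {R I J phi}.
Arguments MA_dec {R I phi}. Arguments MA0 {R I phi}.
Section Core.
Variables (R : realType) (mu : probability R R).
Variables (d : measure_display) (Omega : measurableType d) (P : probability Omega R).
Variables (I : finType) (X : I -> Omega -> R).
Hypothesis hind : mutually_independent P X.
Hypothesis hlaw : forall k, has_law P (X k) mu.

Definition GK (K : {set I}) : set (set Omega) :=
  [set A | exists B : I -> set R, (forall i, measurable (B i)) /\
     (forall i, i \notin K -> B i = setT) /\
     A = \bigcap_(i in [set: I]) (X i @^-1` B i)].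

Lemma GK_meas K : GK K `<=` measurable.
Proof.
move=> _ [B [mB [_ ->]]].
apply: fin_bigcap_measurable; first exact: finite_finset.
move=> i _; rewrite -[X in measurable X]setTI; apply: (proj1 (hlaw i)) => //.
Qed.

Lemma sGK_meas K : <<s GK K >> `<=` measurable.
Proof. exact: smallest_sub (@sigma_algebra_measurable _ Omega) (@GK_meas K). Qed.

Lemma GK_setT K : GK K setT.
Proof.
exists (fun=> setT); split => //; split => //.
by apply/seteqP; split => w //= _ i _.
Qed.

Lemma GK_setI K : setI_closed (GK K).
Proof.
move=> _ _ [B [mB [KB ->]]] [C [mC [KC ->]]].
exists (fun i => B i `&` C i); split; first by move=> i; exact: measurableI.
split; first by move=> i /[dup] /KB -> /KC ->; rewrite setIT.
apply/seteqP; split => w /=.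
  by move=> [h1 h2] i _; split; [exact: h1|exact: h2].
by move=> h; split => i _; have [] := h i Logic.I.
Qed.


Lemma XK_meas (K : {set I}) (j : I) : j \in K ->
  measurable_fun [set: g_sigma_algebraType (GK K)] (X j).
Proof.
move=> jK _ C mC; apply: sub_sigma_algebra.
exists (fun i => if i == j then C else setT); split.
  by move=> i; case: ifP.
split; first by move=> i iK; case: eqP => // ij; move: iK; rewrite ij jK.
apply/seteqP; split => w /=.
  by move=> [_ h] i _; case: eqP => // ->.
by move=> h; split => //; have := h j Logic.I; rewrite eqxx.
Qed.

Lemma hlawX k B : measurable B -> P (X k @^-1` B) = mu B.
Proof. by move=> mB; apply: (proj2 (hlaw k)). Qed.

Lemma mXk k B : measurable B -> measurable (X k @^-1` B).
Proof. by move=> mB; rewrite -[X in measurable X]setTI; apply: (proj1 (hlaw k)). Qed.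

Lemma indep1 (K : {set I}) (k : I) (kK : k \notin K) B (mB : measurable B) A :
  <<s GK K >> A -> P (A `&` X k @^-1` B) = (P A * mu B)%E.
Proof.
move=> hA.
have mXB := mXk k _ mB.
have muBf : mu B = (fine (mu B))%:E by rewrite fineK // fin_num_measure.
have r0 : 0 <= fine (mu B) by rewrite fine_ge0 // measure_ge0.
pose m1 := mrestr P mXB. pose m2 := mscale (NngNum r0) P.
suff -> : P (A `&` X k @^-1` B) = ((fine (mu B))%:E * P A)%E.
  by rewrite muleC -muBf.
have := @g_sigma_algebra_measure_unique _ _ _ (GK K) (@GK_meas K) (fun=> setT)
   (fun=> GK_setT K) _ m1 m2 (@GK_setI K) _ _ A hA.
apply.
- by rewrite predeqE => w; split => // _; exists 0%N.
- move=> _ [C [mC [KC ->]]].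
  set A0 := \bigcap_(i in [set: I]) X i @^-1` C i.
  transitivity (P (A0 `&` X k @^-1` B)); first by [].
  transitivity ((fine (mu B))%:E * P A0)%E; last by [].
  rewrite /A0.
  pose C' i := if i == k then B else C i.
  transitivity (P (\bigcap_(i in [set: I]) X i @^-1` C' i)).
    congr (P _).
    apply/seteqP; split => w /=.
      by move=> [h1 h2] i _; rewrite /C'; case: eqP => [->|_] //; exact: h1.
    move=> h; split; last by have := h k Logic.I; rewrite /C' eqxx.
    move=> i _; have := h i Logic.I; rewrite /C'; case: eqP => [->|//].
    by rewrite KC.
  rewrite !hind; last 2 first.
  + exact: mC.
  + by move=> i; rewrite /C'; case: ifP.
  rewrite (bigD1 k) //= [in RHS](bigD1 k) //= /C' eqxx KC // preimage_setT probability_setT mul1e.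
  rewrite hlawX //; congr (_ * _)%E; first exact: muBf.
  by apply: eq_bigr => i /negbTE ->.
- move=> _; rewrite /m1 /mrestr; apply: (le_lt_trans (probability_le1 _ _)); last exact: ltry.
  exact: measurableI.
Qed.


Lemma mOK (K : {set I}) d2 (T2 : measurableType d2) (Z : Omega -> T2) :
  measurable_fun [set: g_sigma_algebraType (GK K)] Z ->
  measurable_fun [set: Omega] Z.
Proof. by move=> mZ _ C mC; apply: sGK_meas; exact: mZ. Qed.

Lemma core (K : {set I}) (k : I) (kK : k \notin K) d2 (T2 : measurableType d2)
  (Z : Omega -> T2) (mZ : measurable_fun [set: g_sigma_algebraType (GK K)] Z)
  (S : set (T2 * R)) (mS : measurable S)
  (hS : forall z, mu (xsection S z) = 0) :
  P [set w | S (Z w, X k w)] = 0.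
Proof.
have mZO := @mOK K _ _ Z mZ.
have mW : measurable_fun [set: Omega] (fun w => (Z w, X k w)).
  exact: measurable_fun_pair mZO (proj1 (hlaw k)).
pose nu := pushforward P Z.
pose L := pushforward P (fun w => (Z w, X k w)).
have LE : forall A, measurable A -> L A = (nu \x mu)%E A.
  move=> A mA.
  apply: (@measure_unique _ _ _ [set A `*` B | A in measurable & B in measurable]
     (fun=> setT)) => //.
  - by rewrite measurable_prod_measurableType.
  - move=> _ _ [A1 mA1 [B1 mB1 <-]] [A2 mA2 [B2 mB2 <-]].
    rewrite -setXI; exists (A1 `&` A2); first exact: measurableI.
    by exists (B1 `&` B2) => //; exact: measurableI.
  - by move=> _; exists setT => //; exists setT => //; rewrite setXTT.
  - by rewrite predeqE => w; split => // _; exists 0%N.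
  - move=> _ [C mC [B mB <-]].
    transitivity (nu C * mu B)%E; last first.
      by symmetry; apply: product_measure1E.
    rewrite /L /nu /pushforward.
    transitivity (P (Z @^-1` C `&` X k @^-1` B)); first by [].
    apply: (@indep1 K k kK B mB).
    have := mZ measurableT C mC; by rewrite setTI.
  - move=> _; rewrite /L /pushforward.
    apply: (le_lt_trans (probability_le1 _ _)); last exact: ltry.
    by rewrite -[X in measurable X]setTI; apply: mW.
have -> : P [set w | S (Z w, X k w)] = L S by [].
rewrite LE // /product_measure1.
rewrite (eq_integral (fun=> 0%E)); first exact: integral0.
by move=> z _; rewrite /= hS.
Qed.


Hypothesis hmu : has_lebesgue_density mu.

Lemma mu1 (y : R) : mu [set y] = 0.
Proof.
case: hmu => f [mf [f0 hf]].
rewrite hf; last exact: measurable_set1.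
apply: null_set_integral; first exact: measurable_set1.
  by apply/measurable_EFinP; apply: measurable_funS mf.
exact: lebesgue_measure_set1.
Qed.

Lemma meas0 (f : Omega -> R) : measurable_fun [set: Omega] f ->
  measurable [set w | f w = 0].
Proof.
move=> mf; rewrite -[X in measurable X]setTI.
exact: mf measurableT _ (measurable_set1 0).
Qed.

Lemma MA_meas n : forall (J : {set I}) (phi : (I -> R) -> R), #|J| = n -> MA J phi ->
  forall K : {set I}, J \subset K ->
  measurable_fun [set: g_sigma_algebraType (GK K)] (fun w => phi (fun i => X i w)).
Proof.
elim: n => [|n IH] J phi hJ hphi K JK.
  have J0 : J = finset.set0 by apply/eqP; rewrite -cards_eq0 hJ.
  rewrite J0 in hphi.
  have -> : (fun w => phi (fun i => X i w)) = cst (phi (fun=> 0)).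
    by apply/funext => w; exact: (MA0 (proj1 hphi)).
  exact: measurable_cst.
have [k kJ] : exists k, k \in J by apply/card_gt0P; rewrite hJ.
have hJ' : #|J :\ k| = n by move: hJ; rewrite (cardsD1 k) kJ add1n => -[].
have JK' : J :\ k \subset K := fintype.subset_trans (subD1set J k) JK.
have kK : k \in K := fintype.subsetP JK k kJ.
have -> : (fun w => phi (fun i => X i w)) = (fun w =>
   bpart phi k (fun i => X i w) + X k w * apart phi k (fun i => X i w)).
  by apply/funext => w; exact: MA_dec (proj2 hphi).
apply: measurable_funD; first exact: (IH _ _ hJ' (MA_b k hphi)).
apply: measurable_funM; first exact: XK_meas.
exact: (IH _ _ hJ' (MA_a k hphi)).
Qed.

Lemma MA_measO J phi : MA J phi ->
  measurable_fun [set: Omega] (fun w => phi (fun i => X i w)).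
Proof.
move=> h.
exact: (@mOK ([set: I]%SET) _ _ _ (@MA_meas _ J phi erefl h ([set: I]%SET) (finset.subsetT J))).
Qed.


Let S : set ((R * R) * R) := [set z | z.1.1 != 0 /\ z.1.2 + z.2 * z.1.1 = 0].

Lemma mS : measurable S.
Proof.
have mf1 : measurable_fun [set: (R * R) * R] (fun z => z.1.1).
  exact: measurableT_comp measurable_fst measurable_fst.
have mf2 : measurable_fun [set: (R * R) * R] (fun z => z.1.2 + z.2 * z.1.1).
  apply: measurable_funD; first exact: measurableT_comp measurable_snd measurable_fst.
  exact: measurable_funM measurable_snd mf1.
have -> : S = (fun z => z.1.1) @^-1` (~` [set 0]) `&`
              (fun z => z.1.2 + z.2 * z.1.1) @^-1` [set 0].
  apply/seteqP; split => z /= [h1 h2]; split => //.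
    by move=> h; move: h1; rewrite h eqxx.
  by apply/eqP => h; apply: h1.
apply: measurableI.
  rewrite -[X in measurable X]setTI; apply: mf1 => //.
  by apply: measurableC; exact: measurable_set1.
rewrite -[X in measurable X]setTI.
exact: mf2 measurableT _ (measurable_set1 0).
Qed.

Lemma hS z : mu (xsection S z) = 0.
Proof.
case: z => u v; apply/eqP; rewrite -measure_le0.
have [u0|u0] := eqVneq u 0.
  rewrite (_ : xsection S (u, v) = set0) ?measure0 //.
  apply/seteqP; split => t //.
  by rewrite /xsection /= in_setE /S /= => -[]; rewrite u0 eqxx.
rewrite -(mu1 (- v / u)).
apply: le_measure; rewrite ?inE.
- exact: measurable_xsection mS.
- exact: measurable_set1.
move=> t; rewrite /xsection /= in_setE /S /= => -[_ h].
apply: (mulIf u0); rewrite /= divfK //.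
by apply/eqP; rewrite -subr_eq0 opprK addrC h.
Qed.

Lemma MA_null n : forall (J : {set I}) (phi : (I -> R) -> R), #|J| = n -> MA J phi ->
  (exists x, phi x != 0) -> P [set w | phi (fun i => X i w) = 0] = 0.
Proof.
elim: n => [|n IH] J phi hJ hphi [x0 hx0].
  have J0 : J = finset.set0 by apply/eqP; rewrite -cards_eq0 hJ.
  rewrite J0 in hphi.
  rewrite (_ : [set w | phi (fun i => X i w) = 0] = set0) ?measure0 //.
  apply/seteqP; split => w //=.
  rewrite (MA0 (proj1 hphi)) => e; move: hx0; by rewrite (MA0 (proj1 hphi)) e eqxx.
have [k kJ] : exists k, k \in J by apply/card_gt0P; rewrite hJ.
have hJ' : #|J :\ k| = n by move: hJ; rewrite (cardsD1 k) kJ add1n => -[].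
have hdec w : phi (fun i => X i w) =
   bpart phi k (fun i => X i w) + X k w * apart phi k (fun i => X i w).
  exact: MA_dec (proj2 hphi).
have [[x1 hx1]|na] := pselect (exists x, apart phi k x != 0); last first.
  have a0 x : apart phi k x = 0.
    by apply/eqP; apply/negPn/negP => hx; apply: na; exists x.
  rewrite (_ : [set w | phi (fun i => X i w) = 0] =
               [set w | bpart phi k (fun i => X i w) = 0]).
    apply: (IH _ _ hJ' (MA_b k hphi)); exists x0.
    by move: hx0; rewrite (MA_dec k x0 (proj2 hphi)) a0 mulr0 addr0.
  by apply/seteqP; split => w /=; rewrite hdec a0 mulr0 addr0.
pose K := ([set: I] :\ k)%SET.
have kK : k \notin K by rewrite !inE eqxx.
have JK : J :\ k \subset K by apply: finset.setSD; exact: finset.subsetT.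
have ma := @MA_meas _ _ _ hJ' (MA_a k hphi) K JK.
have mb := @MA_meas _ _ _ hJ' (MA_b k hphi) K JK.
have mZ := measurable_fun_pair ma mb.
have E20 := @core K k kK _ _ _ mZ S mS hS.
set E1 := [set w | apart phi k (fun i => X i w) = 0].
set E2 := [set w | S (apart phi k (fun i => X i w), bpart phi k (fun i => X i w), X k w)].
have mE1 : measurable E1 := meas0 _ (MA_measO _ _ (MA_a k hphi)).
have mE2 : measurable E2.
  rewrite -[X in measurable X]setTI.
  exact: (measurable_fun_pair (@mOK K _ _ _ mZ) (proj1 (hlaw k))) measurableT _ mS.
have mE : measurable [set w | phi (fun i => X i w) = 0] := meas0 _ (MA_measO _ _ hphi).
have sub : [set w | phi (fun i => X i w) = 0] `<=` E1 `|` E2.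
  move=> w /= e.
  have [a0|an0] := eqVneq (apart phi k (fun i => X i w)) 0; [left|right] => //.
  by split => //=; rewrite -hdec.
apply/eqP; rewrite -measure_le0.
have mU : measurable (E1 `|` E2) by exact: measurableU.
have := le_measure P (mem_set mE) (mem_set mU) sub.
move/le_trans; apply.
apply: (le_trans (measureU2 P mE1 mE2)).
change (P E1 + P E2 <= 0)%E.
have -> : P E2 = 0 := E20.
have -> : P E1 = 0 := IH _ _ hJ' (MA_a k hphi) (ex_intro _ x1 hx1).
by rewrite adde0.
Qed.

End Core.

Lemma aff_helper (R : realType) (a b c t : R) :
  a = t * b + (1 - t) * c -> a = c + t * (b - c).
Proof. by move=> ->; ring. Qed.

Lemma lin_h1 (R : realType) (d v t : R) : d - v = t * (d - v) + (1 - t) * (d - v).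
Proof. by ring. Qed.
Lemma lin_h2 (R : realType) (d t : R) : d - t = t * (d - 1) + (1 - t) * (d - 0).
Proof. by ring. Qed.

Lemma match_lin (R : realType) (b : bool) (ft f1 f0 : b -> R) (d t : R) :
  (forall h, d - ft h = t * (d - f1 h) + (1 - t) * (d - f0 h)) ->
  d - match boolP b with AltTrue h => ft h | AltFalse _ => 0 end =
  t * (d - match boolP b with AltTrue h => f1 h | AltFalse _ => 0 end) +
  (1 - t) * (d - match boolP b with AltTrue h => f0 h | AltFalse _ => 0 end).
Proof. move=> H; destruct (boolP b) as [h|h]; [apply: H | exact: lin_h1]. Qed.

Lemma match_eq (R : realType) (b : bool) (f g : b -> R) (d : R) :
  (forall h, f h = g h) ->
  d - match boolP b with AltTrue h => f h | AltFalse _ => 0 end =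
  d - match boolP b with AltTrue h => g h | AltFalse _ => 0 end.
Proof. move=> H; destruct (boolP b) as [h|h]; by rewrite ?H. Qed.

Lemma det_aff (R : realType) (N : nat) (p : 'I_N -> nat) :
  aff (fun x : offdiag_pos p -> R => \det (Cmat x)).
Proof.
move=> k x t.
case: k => [[r c] hk].
set k := exist _ (r, c) hk.
have P1 : row r (Cmat (upd x k t)) =
   t *: row r (Cmat (upd x k 1)) + (1 - t) *: row r (Cmat (upd x k 0)).
  apply/rowP => j; rewrite /Cmat /Kmat !mxE.
  apply: match_lin => h'.
  rewrite /upd; case: ifP => _.
    exact: lin_h2.
  exact: lin_h1.
have P2 : row' r (Cmat (upd x k 1)) = row' r (Cmat (upd x k t)).
  apply/matrixP => i j; rewrite /Cmat /Kmat !mxE.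
  apply: match_eq => h'.
  have ne : (exist (fun rc => offdiag p rc) (lift r i, j) h' == k) = false.
    apply/negbTE/eqP => /(congr1 val) /= [] /eqP.
    by rewrite eq_sym (negbTE (neq_lift _ _)).
  by rewrite /upd ne.
have P3 : row' r (Cmat (upd x k 0)) = row' r (Cmat (upd x k t)).
  apply/matrixP => i j; rewrite /Cmat /Kmat !mxE.
  apply: match_eq => h'.
  have ne : (exist (fun rc => offdiag p rc) (lift r i, j) h' == k) = false.
    apply/negbTE/eqP => /(congr1 val) /= [] /eqP.
    by rewrite eq_sym (negbTE (neq_lift _ _)).
  by rewrite /upd ne.
have E := (@determinant_multilinear _ _ _ _ _ r t (1 - t) P1 P2 P3).
have E2 := aff_helper _ _ _ _ _ E.
exact: E2.
Qed.

Lemma Kmat0 (R : realType) (N : nat) (p : 'I_N -> nat) :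
  Kmat (fun _ : offdiag_pos p => (0 : R)) = 0.
Proof.
apply/matrixP => i j; rewrite !mxE.
by destruct (boolP (offdiag p (i, j))).
Qed.

Theorem proposition4 (R : realType) (mu : probability R R)
    (hmu : has_lebesgue_density mu)
    (N : nat) (hN : (2 <= N)%N) (p : 'I_N -> nat) (hp : forall i, (1 <= p i)%N)
    (d : measure_display) (Omega : measurableType d) (P : probability Omega R)
    (X : offdiag_pos p -> Omega -> R)
    (hind : mutually_independent P X)
    (hlaw : forall k, has_law P (X k) mu) :
  P [set w | Cmat (fun k => X k w) \in unitmx] = 1%E.
Proof.
pose phi := fun x : offdiag_pos p -> R => \det (Cmat x).
have hMA : MA [set: offdiag_pos p]%SET phi.
  split; last exact: det_aff.
  move=> x y h; rewrite /phi; congr (\det (Cmat _)).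
  by apply/funext => j; apply: h; rewrite inE.
have nz : exists x, phi x != 0.
  exists (fun=> 0); rewrite /phi /Cmat Kmat0 subr0 det1.
  exact: oner_neq0.
have h0 := @MA_null _ _ _ _ _ _ _ hind hlaw hmu _ _ _ erefl hMA nz.
have mE := @meas0 _ _ _ _ (@MA_measO _ mu _ _ _ _ _ hlaw _ _ hMA).
have -> : [set w | Cmat (fun k => X k w) \in unitmx] =
          ~` [set w | phi (fun k => X k w) = 0].
  apply/seteqP; split => w /=; rewrite unitmxE unitfE /phi.
    by move=> /eqP.
  by move=> h; apply/eqP.
by rewrite probability_setC // h0 sube0.
Qed.
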